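(* Let $\alpha\in(0,1]$ and let $\Omega_\alpha\subset\mathbb{C}$ be the bounded open region enclosed by the closed curve $$\beta(t)=1+2^{\alpha}\left(\sin\tfrac{t}{2}\right)^{\alpha}e^{\,i\left(\alpha\frac{\pi}{2}+t\left(1-\frac{\alpha}{2}\right)\right)},\qquad 0\le t\le 2\pi .$$ Then for a real number $\lambda$, $\lambda\in\Omega_\alpha$ if and only if $1-2^{\alpha}<\lambda<1$.
   Context: Equivalently $\beta(t)=1+e^{it}(1-e^{-it})^{\alpha}$ with the principal branch of the power. $\Omega_\alpha$ is the stability region for eigenvalues of the connectivity matrix in linear fractional-order coupled map lattices of order $\alpha$. *)

(* Defs.v *)
(* the complex plane is modelled as R * R
   (product topology), z = x + i y  <->  (x, y). *)
From HB Require Import structures.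
From mathcomp Require Import all_boot all_order all_algebra.
From mathcomp Require Import all_classical all_reals all_analysis.
Set Implicit Arguments. Unset Strict Implicit. Unset Printing Implicit Defensive.
Import Order.TTheory GRing.Theory Num.Theory numFieldNormedType.Exports.
Local Open Scope classical_set_scope.
Local Open Scope ring_scope.

Section Curve.
Variable R : realType.

Definition beta_mod (a t : R) : R := (2 `^ a) * (sin (t / 2)) `^ a.
Definition beta_arg (a t : R) : R := a * pi / 2 + t * (1 - a / 2).

Definition beta (a t : R) : R * R :=
  (1 + beta_mod a t * cos (beta_arg a t), beta_mod a t * sin (beta_arg a t)).

Definition curve (a : R) : set (R * R) := beta a @` `[0, 2 * pi].

Definition bounded_plane (S : set (R * R)) : Prop :=
  exists M : R, forall p, S p -> `|p.1| <= M /\ `|p.2| <= M.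

(* Omega_a : the bounded open region enclosed by the curve, i.e. the union of
   the bounded connected components of the complement of the curve. *)
Definition Omega (a : R) : set (R * R) :=
  [set z | ~ curve a z /\ bounded_plane (@connected_component (R * R)%type (~` curve a) z)].

End Curve.

(* Main.v *)
Require Import Defs.
From HB Require Import structures.
From mathcomp Require Import all_boot all_order all_algebra.
From mathcomp Require Import all_classical all_reals all_analysis.
From mathcomp Require Import ring lra.
Set Implicit Arguments. Unset Strict Implicit. Unset Printing Implicit Defensive.
Import Order.TTheory GRing.Theory Num.Theory numFieldNormedType.Exports.
Local Open Scope classical_set_scope.
Local Open Scope ring_scope.
Section S.
Variable R : realType.
Variables (a : R) (ha0 : 0 < a) (ha1 : a <= 1).

Definition pp (z : R * R) : R := 1 - z.1.
Definition qq (z : R * R) : R := - z.2.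
Definition rr z := Num.sqrt (pp z ^+ 2 + qq z ^+ 2).
Definition psi z := 2 * atan (qq z / (rr z + pp z)).
Definition tt (s : R) := (pi + s - a * pi / 2) / (1 - a / 2).
Definition hh z := rr z `^ a^-1 - 2 * Num.max 0 (sin (tt (psi z) / 2)).
Definition W := [set z | 0 < rr z + pp z /\ hh z < 0].

Lemma rr_ge0 z : 0 <= rr z. Proof. exact: sqrtr_ge0. Qed.
Lemma rr_sq z : rr z ^+ 2 = pp z ^+ 2 + qq z ^+ 2.
Proof. by rewrite sqr_sqrtr // addr_ge0 // sqr_ge0. Qed.

Lemma rr_pos z : 0 < rr z + pp z -> 0 < rr z.
Proof.
move=> h; rewrite lt_neqAle rr_ge0 andbT; apply/eqP => r0.
have := rr_sq z; rewrite -r0 expr0n /= => e.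
have : pp z ^+ 2 = 0 by nra.
move/eqP; rewrite sqrf_eq0 => /eqP p0.
by move: h; rewrite -r0 p0 addr0 ltxx.
Qed.

Lemma polar z : 0 < rr z + pp z ->
  pp z = rr z * cos (psi z) /\ qq z = rr z * sin (psi z).
Proof.
move=> hd; have rp := rr_pos hd; have hr := rr_sq z.
set d := rr z + pp z; set s := qq z / d.
have c0 : cos (atan s) != 0 by rewrite cos_atan invr_eq0 gt_eqF // sqrtr_gt0;
  rewrite ltr_wpDr ?sqr_ge0.
have c2 : cos (atan s) ^+ 2 = d / (2 * rr z).
  rewrite cos_atan exprVn sqr_sqrtr; last by rewrite addr_ge0 ?sqr_ge0.
  have e : 1 + s ^+ 2 = 2 * rr z / d.
    have dn : d != 0 by rewrite gt_eqF.
    have -> : 1 + s ^+ 2 = (d ^+ 2 + qq z ^+ 2) / d ^+ 2.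
      by rewrite /s; field.
    have -> : d ^+ 2 + qq z ^+ 2 = 2 * rr z * d by rewrite /d; nra.
    by field.
  by rewrite e invf_div.
have sa : sin (atan s) = s * cos (atan s).
  have := atanK s; rewrite /tan => e.
  by rewrite -[X in X * _]e divfK.
rewrite /psi -/d -/s mulr_natl cos_mulr2n sin_mulr2n c2.
rewrite sa [cos _ * (_ * _)]mulrCA -expr2 c2 /s; split.
  by rewrite /d; field; rewrite ?gt_eqF.
by rewrite /d; field; rewrite ?gt_eqF.
Qed.


Lemma psi_range z : -pi < psi z < pi.
Proof.
rewrite /psi; have := atan_gtNpi2 (qq z / (rr z + pp z)).
have := atan_ltpi2 (qq z / (rr z + pp z)).
move=> h1 h2; apply/andP; split; lra.
Qed.

Lemma sin_le0_neg (x : R) : -pi <= x <= 0 -> sin x <= 0.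
Proof.
move=> /andP[h1 h2]; rewrite -[x]opprK sinN oppr_le0; apply: sin_ge0_pi.
apply/andP; split; lra.
Qed.

Lemma sin_le0_pi (x : R) : pi <= x <= 2 * pi -> sin x <= 0.
Proof.
move=> /andP[h1 h2]; have -> : x = (x - pi) + pi by ring.
rewrite sinDpi oppr_le0; apply: sin_ge0_pi; apply/andP; split; lra.
Qed.

Lemma kpos : 0 < 1 - a / 2. Proof. by have := ha1; lra. Qed.

Lemma ttE (s : R) : tt s * (1 - a / 2) = pi + s - a * pi / 2.
Proof. by rewrite /tt divfK // gt_eqF // kpos. Qed.

Lemma tt_range (s : R) : -pi < s < pi -> 0 < sin (tt s / 2) -> 0 < tt s < 2 * pi.
Proof.
move=> /andP[s1 s2] hs; have e := ttE s; have k := kpos.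
have pi0 := @pi_gt0 R; have ha0' := ha0; have ha1' := ha1.
have api : a * pi <= pi by nra.
have api0 : 0 < a * pi by nra.
set T := tt s in e hs *.
have T1 : -2 * pi <= T.
  rewrite leNgt; apply/negP => hT.
  have : T * (1 - a / 2) < -2 * pi * (1 - a / 2) by rewrite ltr_pM2r.
  lra.
have T2 : T <= 4 * pi.
  rewrite leNgt; apply/negP => hT.
  have : 4 * pi * (1 - a / 2) < T * (1 - a / 2) by rewrite ltr_pM2r.
  lra.
apply/andP; split.
  rewrite ltNge; apply/negP => hT.
  have : sin (T / 2) <= 0 by apply: sin_le0_neg; apply/andP; split; lra.
  lra.
rewrite ltNge; apply/negP => hT.
have : sin (T / 2) <= 0 by apply: sin_le0_pi; apply/andP; split; lra.
lra.
Qed.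

Definition cc := cos (a * pi / 2).

Lemma cc_ge0 : 0 <= cc.
Proof.
have pi0 := @pi_gt0 R; have ha0' := ha0; have ha1' := ha1.
apply: cos_ge0_pihalf; apply/andP; split; nra.
Qed.

Lemma cc_lt1 : cc < 1.
Proof.
have pi0 := @pi_gt0 R; have ha0' := ha0; have ha1' := ha1.
have h : cos (a * pi / 2) < cos 0.
  rewrite ltr_cos ?in_itv /=; try (apply/andP; split); nra.
by rewrite cos0 in h.
Qed.

Lemma sin_pos_of_W z : W z -> 0 < sin (tt (psi z) / 2).
Proof.
move=> [hd hn]; rewrite /hh in hn; have := powR_ge0 (rr z) a^-1 => h0.
have : 0 < Num.max 0 (sin (tt (psi z) / 2)) by lra.
by rewrite lt_max ltxx.
Qed.

Lemma psi_bounds z : 0 < sin (tt (psi z) / 2) ->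
  - (pi - a * pi / 2) < psi z < pi - a * pi / 2.
Proof.
move=> hs; have /andP[t1 t2] := tt_range (psi_range z) hs.
have e := ttE (psi z); have k := kpos.
have pi0 := @pi_gt0 R; have ha0' := ha0; have ha1' := ha1.
have : 0 * (1 - a / 2) < tt (psi z) * (1 - a / 2) by rewrite ltr_pM2r.
have : tt (psi z) * (1 - a / 2) < 2 * pi * (1 - a / 2) by rewrite ltr_pM2r.
move=> h1 h2; apply/andP; split; nra.
Qed.

Lemma W_cone z : W z -> pp z < 0 -> pp z ^+ 2 * (1 - cc ^+ 2) < cc ^+ 2 * qq z ^+ 2.
Proof.
move=> Wz hp; have hd := Wz.1; have rp := rr_pos hd.
have [ep eq] := polar hd.
have /andP[b1 b2] := psi_bounds (sin_pos_of_W Wz).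
have pi0 := @pi_gt0 R; have ha0' := ha0; have ha1' := ha1.
have api : 0 < a * pi by nra.
have hcos : - cc < cos (psi z).
  have e : cos (pi - a * pi / 2) = - cc by rewrite cosB cospi sinpi /cc; ring.
  rewrite -e -[cos (psi z)]cos_norm ltr_cos ?in_itv /=.
  - by rewrite ltr_norml b1 b2.
  - rewrite normr_ge0 /= ler_norml; apply/andP; split; lra.
  - apply/andP; split; nra.
have cn : cos (psi z) < 0 by move: hp; rewrite ep pmulr_rlt0.
have c0 := cc_ge0.
have c2 : cos (psi z) ^+ 2 < cc ^+ 2 by nra.
have hq : qq z ^+ 2 = rr z ^+ 2 - pp z ^+ 2 by rewrite rr_sq; ring.
have h2 : rr z ^+ 2 * cos (psi z) ^+ 2 < rr z ^+ 2 * cc ^+ 2.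
  by rewrite ltr_pM2l // exprn_gt0.
rewrite hq ep; nra.
Qed.

Lemma hh0_curve z : 0 < rr z + pp z -> hh z = 0 -> curve a z.
Proof.
move=> hd h0; have rp := rr_pos hd; have [ep eq] := polar hd.
have pr := powR_gt0 a^-1 rp.
rewrite /hh in h0.
have hm : Num.max 0 (sin (tt (psi z) / 2)) = rr z `^ a^-1 / 2 by lra.
have hs : 0 < sin (tt (psi z) / 2).
  have : 0 < Num.max 0 (sin (tt (psi z) / 2)) by rewrite hm; lra.
  by rewrite lt_max ltxx.
rewrite max_r in hm; last exact: ltW.
have /andP[t1 t2] := tt_range (psi_range z) hs.
exists (tt (psi z)).
  by rewrite /= in_itv /=; apply/andP; split; lra.
have ea : beta_arg a (tt (psi z)) = psi z + pi.
  by rewrite /beta_arg mulrC ttE; ring.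
have em : beta_mod a (tt (psi z)) = rr z.
  rewrite /beta_mod -powRM ?(ltW hs) // hm mulrC divfK // -powRrM mulVf.
    by rewrite powRr1 // ltW.
  by rewrite gt_eqF.
rewrite /beta ea em cosDpi sinDpi; case: z hd rp ep eq {h0 pr hm hs t1 t2 ea em} => x y.
rewrite /pp /qq /= => _ _ e1 e2; congr pair; lra.
Qed.

Lemma W_bound z : W z -> `|z.1| <= 3 /\ `|z.2| <= 3.
Proof.
move=> [hd hn]; rewrite /hh in hn; have rp := rr_pos hd.
have hs1 : Num.max 0 (sin (tt (psi z) / 2)) <= 1.
  by rewrite ge_max ler01 sin_le1.
have h2 : rr z `^ a^-1 < 2 by lra.
have r2 : rr z < 2.
  case: (leP (rr z) 1) => h; first lra.
  have : rr z <= rr z `^ a^-1.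
    by apply: le1r_powR; [exact: ltW | rewrite invf_ge1].
  lra.
have hp : `|pp z| <= rr z.
  by rewrite -sqrtr_sqr ler_wsqrtr // lerDl sqr_ge0.
have hq : `|qq z| <= rr z.
  by rewrite -sqrtr_sqr ler_wsqrtr // lerDr sqr_ge0.
move: hp hq; rewrite /pp /qq normrN !ler_norml => /andP[h3 h4] /andP[h5 h6].
by split; apply/andP; split; lra.
Qed.

Lemma lam_W lam : 1 - 2 `^ a < lam < 1 -> W (lam, 0).
Proof.
move=> /andP[l1 l2].
have er : rr (lam, 0) = 1 - lam.
  by rewrite /rr /pp /qq /= oppr0 expr0n /= addr0 sqrtr_sqr ger0_norm //; lra.
have ep : psi (lam, 0) = 0.
  by rewrite /psi /qq /= oppr0 mul0r atan0 mulr0.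
have et : tt 0 = pi.
  have k := kpos; have e := ttE 0.
  by apply: (mulIf (lt0r_neq0 k)); rewrite e; ring.
split; first by rewrite er /pp /=; lra.
rewrite /hh er ep et sin_pihalf max_r ?ler01 //.
have : (1 - lam) `^ a^-1 < (2 `^ a) `^ a^-1.
  apply: gt0_ltr_powR; rewrite ?invr_gt0 ?inE ?nnegrE ?powR_ge0 //; lra.
rewrite -powRrM mulfV ?gt_eqF // powRr1 //; lra.
Qed.

Lemma curve_real x : curve a (x, 0) -> x = 1 \/ x = 1 - 2 `^ a.
Proof.
move=> [t ht]; rewrite /= in_itv /= in ht; case/andP: ht => t0 t1.
rewrite /beta => -[e1 e2].
have pi0 := @pi_gt0 R; have ha0' := ha0; have ha1' := ha1; have k := kpos.
have api : 0 < a * pi by nra.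
have [M0|M0] := eqVneq (beta_mod a t) 0.
  by left; rewrite -e1 M0 mul0r addr0.
move/eqP: e2; rewrite mulf_eq0 (negbTE M0) /= => /eqP s0.
set g := beta_arg a t in s0 e1.
have tk1 : 0 <= t * (1 - a / 2) by rewrite mulr_ge0 // ltW.
have tk2 : t * (1 - a / 2) <= 2 * pi * (1 - a / 2) by rewrite ler_pM2r.
have g1 : a * pi / 2 <= g by rewrite /g /beta_arg; lra.
have g2 : g <= 2 * pi - a * pi / 2 by rewrite /g /beta_arg; lra.
have gpi : g = pi.
  case: (ltgtP g pi) => // h.
  - have : 0 < sin g by apply: sin_gt0_pi; apply/andP; split; lra.
    by rewrite s0 ltxx.
  - have : 0 < sin (g - pi) by apply: sin_gt0_pi; apply/andP; split; lra.
    have -> : g - pi = g + pi - pi *+ 2 by rewrite mulr2n; ring.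
    rewrite -[in X in X -> _](sinD2pi (g + pi - pi *+ 2)).
    by rewrite subrK sinDpi s0 oppr0 ltxx.
have tpi : t = pi.
  apply: (mulIf (lt0r_neq0 k)); move: gpi; rewrite /g /beta_arg => ?; lra.
right; rewrite -e1 gpi cospi /beta_mod tpi sin_pihalf powR1 /=; ring.
Qed.

Lemma curve_1 : curve a (1, 0).
Proof.
exists 0; first by rewrite /= in_itv /= lexx /=; have := @pi_gt0 R; lra.
by rewrite /beta /beta_mod mul0r sin0 powR0 ?gt_eqF // !mulr0 !mul0r addr0.
Qed.

Lemma curve_2 : curve a (1 - 2 `^ a, 0).
Proof.
exists pi.
  rewrite /= in_itv /=; have := @pi_gt0 R => ?.
  by apply/andP; split; lra.
have e : beta_arg a pi = pi by rewrite /beta_arg; field.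
rewrite /beta e /beta_mod sin_pihalf powR1 /= cospi sinpi; congr pair; ring.
Qed.

Lemma cont_powR (x c : R) : 0 < x -> {for x, continuous (fun y : R => y `^ c)}.
Proof.
move=> x0.
have pos : \forall y \near x, 0 < y := @cvgr_gt R R (nbhs x) _ id x cvg_id 0 x0.
have e : {near x, (fun y => expR (c * ln y)) =1 (fun y => y `^ c)}.
  near=> y; rewrite /powR gt_eqF //; near: y; exact: pos.
apply: cvg_trans (near_eq_cvg e) _.
rewrite /powR gt_eqF //.
have h1 : (fun y => c * ln y) @ x --> c * ln x.
  by apply: cvgMl_tmp; exact: continuous_ln.
exact: (continuous_comp h1 (@continuous_expR R _)).
Unshelve. all: by end_near. Qed.

Lemma cont_sqrt (x : R) : 0 < x -> {for x, continuous (@Num.sqrt R)}.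
Proof.
move=> x0.
have pos : \forall y \near x, 0 < y := @cvgr_gt R R (nbhs x) _ id x cvg_id 0 x0.
have e : {near x, (fun y => y `^ 2^-1) =1 (@Num.sqrt R)}.
  near=> y; rewrite powR12_sqrt // ltW //; near: y; exact: pos.
apply: cvg_trans (near_eq_cvg e) _.
rewrite -powR12_sqrt ?ltW //; exact: cont_powR.
Unshelve. all: by end_near. Qed.

Lemma cont_pp (z : R * R) : pp x @[x --> z] --> pp z.
Proof. rewrite /pp; apply: cvgB; [exact: cvg_cst | exact: cvg_fst]. Qed.

Lemma cont_qq (z : R * R) : qq x @[x --> z] --> qq z.
Proof. rewrite /qq; apply: cvgN; exact: cvg_snd. Qed.

Lemma cont_rr (z : R * R) : 0 < rr z -> rr x @[x --> z] --> rr z.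
Proof.
move=> r0.
have h : (fun x => pp x ^+ 2 + qq x ^+ 2) @ z --> pp z ^+ 2 + qq z ^+ 2.
  have -> : (fun x => pp x ^+ 2 + qq x ^+ 2) = (fun x => pp x * pp x + qq x * qq x).
    by apply: funext => x; rewrite !expr2.
  rewrite !expr2; apply: cvgD; apply: cvgM; by [exact: cont_pp | exact: cont_qq].
have p0 : 0 < pp z ^+ 2 + qq z ^+ 2.
  by rewrite -rr_sq exprn_gt0.
exact: (continuous_comp h (cont_sqrt p0)).
Qed.

Lemma cont_hh (z : R * R) : 0 < rr z + pp z -> hh x @[x --> z] --> hh z.
Proof.
move=> hd0; have rp := rr_pos hd0.
have hr := cont_rr rp.
have hd : (fun x => rr x + pp x) @ z --> rr z + pp z.
  by apply: cvgD; [exact: hr | exact: cont_pp].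
have hi : (fun x => (rr x + pp x)^-1) @ z --> (rr z + pp z)^-1.
  by apply: cvgV => //; exact: lt0r_neq0.
have hs : (fun x => qq x / (rr x + pp x)) @ z --> qq z / (rr z + pp z).
  by apply: cvgM; [exact: cont_qq | exact: hi].
have hpsi : psi x @[x --> z] --> psi z.
  rewrite /psi; apply: cvgMl_tmp; exact: (continuous_comp hs (@continuous_atan R _)).
have htt : (fun x => tt (psi x) / 2) @ z --> tt (psi z) / 2.
  apply: cvgMr_tmp; apply: cvgMr_tmp; apply: cvgB; last exact: cvg_cst.
  by apply: cvgD; [exact: cvg_cst | exact: hpsi].
have hsin : (fun x => sin (tt (psi x) / 2)) @ z --> sin (tt (psi z) / 2).
  exact: (continuous_comp htt (@continuous_sin R _)).
have hmax : (fun x => Num.max 0 (sin (tt (psi x) / 2))) @ z -->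
            Num.max 0 (sin (tt (psi z) / 2)).
  exact: (@continuous_max R _ (fun=> 0) (fun x => sin (tt (psi x) / 2)) z (cvg_cst _) hsin).
have hpow : (fun x => rr x `^ a^-1) @ z --> rr z `^ a^-1.
  exact: (continuous_comp hr (@cont_powR (rr z) a^-1 rp)).
by apply: cvgB; [exact: hpow | apply: cvgMl_tmp; exact: hmax].
Qed.

Lemma cont_d (z : R * R) : 0 < rr z + pp z -> (fun x => rr x + pp x) @ z --> rr z + pp z.
Proof.
move=> hd0; have rp := rr_pos hd0.
by apply: cvgD; [exact: cont_rr | exact: cont_pp].
Qed.

Lemma W_open : open W.
Proof.
rewrite openE => z [hd hn].
have nb1 := cvgr_gt _ (cont_d hd) 0 hd.
have nb2 := cvgr_lt _ (cont_hh hd) 0 hn.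
rewrite /interior; near=> x; split; near: x; [exact: nb1 | exact: nb2].
Unshelve. all: by end_near. Qed.

Lemma W_closure z : ~ curve a z -> closure W z -> W z.
Proof.
move=> nc cl.
case: (ltP 0 (rr z + pp z)) => hd.
  have ch := cont_hh hd.
  case: (ltgtP (hh z) 0) => h.
  - by split.
  - have nb : \forall x \near z, 0 < hh x by apply: (cvgr_gt _ ch 0 h).
    have [y [[_ hy] hy']] := cl _ nb.
    by move: hy'; rewrite /= ltNge (ltW hy).
  - by exfalso; apply: nc; exact: hh0_curve.
have r0 := rr_ge0 z; have hr := rr_sq z.
have q0 : qq z = 0.
  have : qq z ^+ 2 <= 0 by nra.
  by move=> h; apply/eqP; rewrite -sqrf_eq0 eq_le h sqr_ge0.
have [p0|pn] : pp z = 0 \/ pp z < 0.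
  by case: (ltgtP (pp z) 0) => h; [right | nra | left].
  exfalso; apply: nc; case: z {cl hd r0 hr} q0 p0 => x y.
  rewrite /pp /qq /= => q0 p0.
  have -> : x = 1 by lra.
  have -> : y = 0 by lra.
  exact: curve_1.
have c1 := cc_lt1; have c0 := cc_ge0.
have hg : (fun x => pp x * pp x * (1 - cc ^+ 2) - cc ^+ 2 * (qq x * qq x)) @ z -->
    pp z * pp z * (1 - cc ^+ 2) - cc ^+ 2 * (qq z * qq z).
  apply: cvgB; [apply: cvgMr_tmp | apply: cvgMl_tmp]; apply: cvgM;
    by [exact: cont_pp | exact: cont_qq].
have gpos : 0 < pp z * pp z * (1 - cc ^+ 2) - cc ^+ 2 * (qq z * qq z).
  rewrite q0 mulr0 mulr0 subr0 mulr_gt0 //; first by nra.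
  by rewrite subr_gt0 expr_lt1 //.
have nb1 : \forall x \near z, 0 < pp x * pp x * (1 - cc ^+ 2) - cc ^+ 2 * (qq x * qq x)
  by apply: (cvgr_gt _ hg 0 gpos).
have nb2 : \forall x \near z, pp x < 0 by apply: (cvgr_lt _ (@cont_pp z) 0 pn).
have nb : \forall x \near z, 0 < pp x * pp x * (1 - cc ^+ 2) - cc ^+ 2 * (qq x * qq x)
   /\ pp x < 0.
  by near=> x; split; near: x; [exact: nb1 | exact: nb2].
have [y [Wy [hy1 hy2]]] := cl _ nb.
have := W_cone Wy hy2; rewrite !expr2; lra.
Unshelve. all: by end_near. Qed.

Lemma comp_sub lam : 1 - 2 `^ a < lam < 1 ->
  connected_component (~` curve a) (lam, 0) `<=` W.
Proof.
move=> hl; set Cc := connected_component _ _.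
have Ccon : connected Cc by exact: component_connected.
have nc : ~ curve a (lam, 0).
  by move/curve_real => []; move: hl => /andP[h1 h2] e; move: h1 h2; rewrite e; lra.
have Cx : Cc (lam, 0) := connected_component_refl nc.
have e := Ccon (Cc `&` W).
have e' : Cc `&` W = Cc.
  apply: e.
  - by exists (lam, 0); split => //; exact: lam_W.
  - by exists W => //; exact: W_open.
  - exists (closure W); first exact: closed_closure.
    apply/seteqP; split => y [Cy Wy]; split => //.
      exact: subset_closure.
    by apply: W_closure => //; exact: (connected_component_sub Cy).
move=> y Cy; have : (Cc `&` W) y by rewrite e'; exact: Cy.
by case.
Qed.

Lemma ray_sub (S : set R) lam : is_interval S -> S lam ->
  (forall x, S x -> ~ curve a (x, 0)) ->
  [set (x, 0) | x in S] `<=` connected_component (~` curve a) (lam, 0).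
Proof.
move=> iS Sl hS; apply: connected_component_max.
- by exists lam.
- by move=> p [x Sx <-]; exact: hS.
- apply: connected_continuous_connected; first exact/connected_intervalP.
  have fc : continuous (fun x : R => (x, (0 : R))).
    by move=> x; apply: (@cvg_pair _ _ _ _ (nbhs x) (nbhs (0 : R))); [exact: cvg_id | exact: cvg_cst].
  exact: continuous_subspaceT.
Qed.

Lemma main_sec lam : Omega a (lam, 0) <-> 1 - 2 `^ a < lam < 1.
Proof.
have p2 : 0 < 2 `^ a by apply: powR_gt0.
split.
  move=> [nc [M hM]]; apply/andP; split.
    rewrite ltNge; apply/negP => hl.
    case: (eqVneq lam (1 - 2 `^ a)) => [e | ne].
      by apply: nc; rewrite e; exact: curve_2.
    have hl' : lam < 1 - 2 `^ a by rewrite lt_neqAle ne hl.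
    have := @ray_sub [set x | x <= lam] lam _ (lexx lam) _.
    move=> /(_ _ _) H.
    have [] := hM (lam - `|M| - 1, 0).
      apply: H.
      - by move=> x y hx hy w /andP[_ h]; rewrite /=; apply: le_trans h hy.
      - by move=> x hx /curve_real [] e; move: hx; rewrite /= e; lra.
      - by exists (lam - `|M| - 1) => //=; have := normr_ge0 M; lra.
    rewrite /= ler_norml => /andP[h1 h2] _; have := ler_norm M; lra.
  rewrite ltNge; apply/negP => hl.
  case: (eqVneq lam 1) => [e | ne].
    by apply: nc; rewrite e; exact: curve_1.
  have hl' : 1 < lam by rewrite lt_neqAle eq_sym ne hl.
  have := @ray_sub [set x | lam <= x] lam _ (lexx lam) _.
  move=> /(_ _ _) H.
  have [] := hM (lam + `|M| + 1, 0).
    apply: H.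
    - by move=> x y hx hy w /andP[h _]; rewrite /=; apply: le_trans hx h.
    - by move=> x hx /curve_real [] e; move: hx; rewrite /= e; lra.
    - by exists (lam + `|M| + 1) => //=; have := normr_ge0 M; lra.
  rewrite /= ler_norml => /andP[h1 h2] _; have := ler_norm M; lra.
move=> hl; split.
  by move/curve_real => []; move: hl => /andP[h1 h2] e; move: h1 h2; rewrite e; lra.
exists 3 => p Cp; exact: W_bound (comp_sub hl Cp).
Qed.
End S.

Theorem mainTheorem2 (R : realType) (a : R) (ha0 : 0 < a) (ha1 : a <= 1)
  (lam : R) :
  Omega a (lam, 0) <-> 1 - 2 `^ a < lam < 1.
Proof. exact: (main_sec ha0 ha1 lam). Qed.
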